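(* For every ring $R$ and every nonnegative integer $n$, the closure of $\mathcal{O}^n_0(R)$ in $R^R$ is contained in $\mathcal{D}^n(R)$.
   Context: Rings are commutative with unit. A derivation on $R$ is a map $d\colon R\to R$ with $d(x+y)=d(x)+d(y)$ and $d(xy)=d(x)y+d(y)x$. Inductively: $\mathcal{D}^0(R)=\{0\}$; for $n>0$, $D\in\mathcal{D}^n(R)$ if $D$ is additive and $D(xy)-D(x)y-D(y)x=B(x,y)$ for all $x,y\in R$, where $B$ in each variable separately is in $\mathcal{D}^{n-1}(R)$. A differential operator of degree at most $n$ on $R$ is an $R$-linear combination of finitely many maps $d_1\circ\cdots\circ d_k$, $d_i$ derivations on $R$, $k\le n$ (for $k=0$ the identity map). $\mathcal{O}^n_0(R)$ is the set of differential operators $D$ of degree at most $n$ with $D(1)=0$. $R^R$ carries the product topology with $R$ discrete. *)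

(* Defs.v *)
From HB Require Import structures.
From mathcomp Require Import all_boot all_order all_algebra.
From mathcomp Require Import all_classical all_reals all_analysis.
Set Implicit Arguments. Unset Strict Implicit. Unset Printing Implicit Defensive.
Import Order.TTheory GRing.Theory Num.Theory.
Local Open Scope ring_scope.

(* R : comPzRingType = commutative ring with unit (the zero ring allowed). *)

Definition additive_map (R : comPzRingType) (D : R -> R) : Prop :=
  forall x y, D (x + y) = D x + D y.

Definition is_derivation (R : comPzRingType) (d : R -> R) : Prop :=
  additive_map d /\ forall x y, d (x * y) = d x * y + d y * x.

Fixpoint Dn (R : comPzRingType) (n : nat) : (R -> R) -> Prop :=
  match n with
  | 0%N => fun D => forall x, D x = 0
  | m.+1 => fun D =>
      additive_map D /\
      let B := fun x y => D (x * y) - D x * y - D y * x in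
      (forall x, Dn m (B x)) /\ (forall y, Dn m (fun x => B x y))
  end.

Definition comp_list (R : comPzRingType) (ds : seq (R -> R)) : R -> R :=
  foldr (fun d f => d \o f) id ds.

Definition diff_op (R : comPzRingType) (n : nat) (D : R -> R) : Prop :=
  exists terms : seq (R * seq (R -> R)),
    (forall t, t \in terms -> (size t.2 <= n)%N /\
                              forall d, d \in t.2 -> is_derivation d) /\
    forall x, D x = \sum_(t <- terms) t.1 * comp_list t.2 x.

Definition O0 (R : comPzRingType) (n : nat) : set (R -> R) :=
  [set D | diff_op n D /\ D 1 = 0].

Definition RR (R : comPzRingType) := {ptws R -> discrete_topology R}.

(* Main.v *)
Require Import Defs.
From mathcomp Require Import all_boot all_order all_algebra.
From mathcomp Require Import all_classical all_reals all_analysis.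
From mathcomp Require Import ring.
Import GRing.Theory.
Set Implicit Arguments. Unset Strict Implicit.
Local Open Scope classical_set_scope.
Local Open Scope ring_scope.

Definition Bf {R : comPzRingType} (D : R -> R) (x y : R) :=
  D (x * y) - D x * y - D y * x.

Lemma Dn_ext (R : comPzRingType) m (D1 D2 : R -> R) :
  (forall x, D1 x = D2 x) -> Dn m D1 -> Dn m D2.
Proof. by move=> h; rewrite (funext h). Qed.

Lemma Dn_intro (R : comPzRingType) m (D : R -> R) :
  additive_map D -> (forall x, Dn m (fun y => Bf D x y)) -> Dn m.+1 D.
Proof.
move=> hA hB; split => //; split => // y.
apply: Dn_ext (hB y) => x; rewrite /Bf mulrC; ring.
Qed.

Lemma Dn_S (R : comPzRingType) m (D : R -> R) : Dn m.+1 D ->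
  additive_map D /\ (forall x, Dn m (fun y => Bf D x y)).
Proof. by case=> hA [h1 h2]. Qed.

Lemma Dn0 (R : comPzRingType) m : Dn m (fun _ : R => 0).
Proof.
elim: m => [//|m IH]; apply: Dn_intro; first by move=> x y; rewrite addr0.
by move=> x; apply: Dn_ext IH => y; rewrite /Bf; ring.
Qed.

Lemma Dn_add (R : comPzRingType) m (D1 D2 : R -> R) :
  Dn m D1 -> Dn m D2 -> Dn m (fun x => D1 x + D2 x).
Proof.
elim: m D1 D2 => [D1 D2 h1 h2 x|m IH D1 D2 /Dn_S[a1 b1] /Dn_S[a2 b2]].
  by rewrite /= h1 h2 addr0.
apply: Dn_intro; first by move=> x y; rewrite a1 a2; ring.
move=> x; apply: Dn_ext (IH _ _ (b1 x) (b2 x)) => y; rewrite /Bf; ring.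
Qed.

Lemma Dn_scale (R : comPzRingType) m (c : R) (D : R -> R) :
  Dn m D -> Dn m (fun x => c * D x).
Proof.
elim: m D => [D h x|m IH D /Dn_S[a b]].
  by rewrite /= h mulr0.
apply: Dn_intro; first by move=> x y; rewrite a; ring.
move=> x; apply: Dn_ext (IH _ (b x)) => y; rewrite /Bf; ring.
Qed.

Lemma Dn_mono (R : comPzRingType) m (D : R -> R) : Dn m D -> Dn m.+1 D.
Proof.
elim: m D => [D h|m IH D /Dn_S[a b]].
  apply: Dn_intro; first by move=> x y; rewrite !h addr0.
  by move=> x y; rewrite /Bf !h; ring.
by apply: Dn_intro => // x; apply: IH.
Qed.

Lemma Dn_le (R : comPzRingType) m n (D : R -> R) :
  (m <= n)%N -> Dn m D -> Dn n D.
Proof.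
elim: n => [|n IH]; first by rewrite leqn0 => /eqP ->.
rewrite leq_eqVlt => /orP [/eqP -> //|]; rewrite ltnS => h hD.
exact/Dn_mono/IH.
Qed.

Lemma dervn0 (R : comPzRingType) (d : R -> R) : is_derivation d -> d 0 = 0.
Proof.
case=> hA _; have := hA 0 0; rewrite addr0 => h.
by apply: (addrI (d 0)); rewrite addr0 -h.
Qed.

Lemma dervn1 (R : comPzRingType) (d : R -> R) : is_derivation d -> d 1 = 0.
Proof.
case=> _ hM; have := hM 1 1; rewrite !mulr1 => h.
by apply: (addrI (d 1)); rewrite addr0 -h.
Qed.

Lemma deriv_Dn1 (R : comPzRingType) (d : R -> R) : is_derivation d -> Dn 1 d.
Proof.
move=> [hA hM]; apply: Dn_intro => // x y.
by rewrite /Bf hM; ring.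
Qed.

Lemma Dn_comp (R : comPzRingType) m (d E : R -> R) :
  is_derivation d -> Dn m E -> Dn m.+1 (fun x => d (E x)).
Proof.
move=> hd; have [hA hM] := hd.
elim: m E => [E h|m IH E /[dup] hE /Dn_S[a b]].
  by apply: Dn_ext (Dn0 _ 1) => x; rewrite h dervn0.
apply: Dn_intro; first by move=> x y; rewrite a hA.
move=> x.
have e : forall y, Bf (fun x => d (E x)) x y =
   d (Bf E x y) + E x * d y + d x * E y.
  move=> y; have hb : E (x * y) = Bf E x y + E x * y + E y * x.
    by rewrite /Bf; ring.
  move: (Bf E x y) hb => bb hb.
  rewrite /Bf /= hb !hA !hM; ring.
apply: (@Dn_ext R m.+1 _ _ (fun y => esym (e y))).
apply: Dn_add; [apply: Dn_add|].
- exact: IH.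
- apply: Dn_scale. have h1 := deriv_Dn1 hd. have h2 := Dn_le (ltn0Sn m) h1. exact h2.
- exact: Dn_scale.
Qed.
Lemma comp_Dn (R : comPzRingType) (ds : seq (R -> R)) :
  ds != [::] -> (forall d, d \in ds -> is_derivation d) ->
  Dn (size ds) (comp_list ds) /\ comp_list ds 1 = 0.
Proof.
elim: ds => [//|d ds IH] _ hds.
have hd : is_derivation d by apply: hds; rewrite mem_head.
case: ds IH hds => [|d' ds] IH hds.
  by split; [exact: deriv_Dn1 | exact: dervn1].
have [h1 h2] : Dn (size (d' :: ds)) (comp_list (d' :: ds)) /\
               comp_list (d' :: ds) 1 = 0.
  by apply: IH => // e he; apply: hds; rewrite in_cons he orbT.
split; first exact: (Dn_comp hd h1).
by change (d (comp_list (d' :: ds) 1) = 0); rewrite h2 dervn0.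
Qed.

Lemma sum_Dn (R : comPzRingType) n (terms : seq (R * seq (R -> R))) :
  (forall t, t \in terms -> (size t.2 <= n)%N /\
                              forall d, d \in t.2 -> is_derivation d) ->
  Dn n (fun x => \sum_(t <- terms | t.2 != [::]) t.1 * comp_list t.2 x).
Proof.
elim: terms => [|t terms IH] h.
  by apply: Dn_ext (Dn0 _ _) => x; rewrite big_nil.
have IH' : Dn n (fun x => \sum_(t <- terms | t.2 != [::]) t.1 * comp_list t.2 x).
  by apply: IH => u hu; apply: h; rewrite in_cons hu orbT.
have [hs hd] := h t (mem_head _ _).
case E: (t.2 == [::]).
  by apply: Dn_ext IH' => x; rewrite big_cons E.
apply: (@Dn_ext _ _ (fun x => t.1 * comp_list t.2 x +
   \sum_(t <- terms | t.2 != [::]) t.1 * comp_list t.2 x)).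
  by move=> x; rewrite big_cons E.
apply: Dn_add => //; apply: Dn_scale.
have [h1 _] := comp_Dn (negbT E) hd.
exact: Dn_le hs h1.
Qed.

Lemma O0_Dn (R : comPzRingType) n (D : R -> R) : O0 n D -> Dn n D.
Proof.
move=> [[terms [ht hD]] hD1].
set S := fun x => \sum_(t <- terms | t.2 != [::]) t.1 * comp_list t.2 x.
set c := \sum_(t <- terms | ~~ (t.2 != [::])) t.1.
have eD : forall x, D x = S x + c * x.
  move=> x; rewrite hD (bigID (fun t => t.2 != [::])) /=; congr (_ + _).
  rewrite /c mulr_suml; apply: eq_bigr => t; rewrite negbK => /eqP ->.
  by [].
have S1 : S 1 = 0.
  rewrite /S big1_seq // => t /andP [ne tin].
  have [_ hd] := ht t tin.
  by have [_ ->] := comp_Dn ne hd; rewrite mulr0.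
have c0 : c = 0 by move: hD1; rewrite eD S1 add0r mulr1.
apply: (@Dn_ext _ _ S); first by move=> x; rewrite eD c0 mul0r addr0.
exact: sum_Dn.
Qed.

Lemma fin_Dn (R : comPzRingType) n (D : R -> R) :
  (forall s : seq R, exists E, Dn n E /\ forall z, z \in s -> E z = D z) ->
  Dn n D.
Proof.
elim: n D => [|n IH] D h.
  move=> x; have [E [hE hs]] := h [:: x].
  by rewrite -hs ?mem_head // hE.
split.
  move=> x y; have [E [hE hs]] := h [:: x; y; x + y].
  have [a _] := Dn_S hE.
  rewrite -!hs ?a // !in_cons eqxx ?orbT //.
split.
  move=> x; apply: IH => s.
  have [E [hE hs]] := h (x :: s ++ [seq x * y | y <- s]).
  have [_ [b _]] := hE.
  exists (fun y => E (x * y) - E x * y - E y * x); split; first exact: b.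
  move=> z zs; rewrite !hs //.
  - by rewrite in_cons mem_cat zs orbT.
  - by rewrite mem_head.
  - by rewrite in_cons mem_cat map_f ?orbT.
move=> y; apply: IH => s.
have [E [hE hs]] := h (y :: s ++ [seq x * y | x <- s]).
have [_ [_ b]] := hE.
exists (fun x => E (x * y) - E x * y - E y * x); split; first exact: b.
move=> z zs; rewrite !hs //.
- by rewrite mem_head.
- by rewrite in_cons mem_cat zs orbT.
- by rewrite in_cons mem_cat (map_f (fun x => x * y)) ?orbT.
Qed.
Lemma nbhs_pt (R : comPzRingType) (D : RR R) (z : R) :
  nbhs D [set g : RR R | g z = D z].
Proof.
have := @proj_continuous R (fun _ => discrete_topology R) z D [set D z].
apply.
rewrite nbhs_principalE; exact/principal_filterP.
Qed.

Lemma nbhs_seq (R : comPzRingType) (D : RR R) (s : seq R) :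
  nbhs D [set g : RR R | forall z, z \in s -> g z = D z].
Proof.
elim: s => [|a s IH].
  by have := nbhs_pt D 0; by apply: filterS => g _ z.
move: (nbhs_pt D a) IH; apply: filterS2 => g ha hs z.
rewrite in_cons => /orP [/eqP -> //|]; exact: hs.
Qed.

Unset Implicit Arguments. Set Strict Implicit.

Theorem lemma2p2 (R : comPzRingType) (n : nat) :
  (@closure (RR R) (@O0 R n : set (RR R))) `<=` (@Dn R n : set (R -> R)).
Proof.
move=> D hcl; apply: fin_Dn => s.
have [g [hO hs]] := hcl _ (nbhs_seq D s).
exists g; split; first exact: O0_Dn hO.
exact: hs.
Qed.
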